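(* Let $M$ be a canonical dtpla with $P_M=\{\hat p_1,\dots,\hat p_n\}$ and let $N$ be a total dtop, all of whose states are reachable, with $Q_N\subseteq T_\Delta(Q_M\times P_M)^n$. Let $\varphi:Q_N\times P_M\to T_\Delta(Q_M\times P_M)$ be given by $\varphi((t_1,\dots,t_n),\hat p_i)=t_i$, and assume $\varphi(q,p)\in T_\Delta(\{\langle\bar q,p\rangle\mid\bar q\in Q_M,\rho_M(\bar q)=p\})$ for all $q\in Q_N$, $p\in P_M$. Suppose $N$ satisfies: (i) $A_N\Phi=\sqcap\{A_M(p)\Omega\mid p\in P_M\}$; (ii) for all $v\in\mathbb N_+^*$, $q\in Q_N$, $p\in P_M$: if $A_N/v=q(x_0)$ then $\varphi(q,p)=A_M(p)\Omega/v$; (iii) for all $q\in Q_N$ and $a\in\Sigma^{(k)}$: $\mathrm{rhs}_N(q,a)\Phi=\sqcap\{\mathrm{rhs}_{M,\varphi}(q,a,p_1,\dots,p_k)\Omega\mid p_1,\dots,p_k\in P_M\}$; (iv) for all $q,\bar q\in Q_N$, $a\in\Sigma^{(k)}$, $i\in[k]$, all trees $s_j\in T_\Sigma$ ($j\in[k]$, $j\neq i$) with $p_j=\delta_M(s_j)$, all $p\in P_M$ and all $v\in V_\bot(\mathrm{rhs}_N(q,a)\Phi)$: if $\mathrm{rhs}_N(q,a)/v=\bar q(x_i)$ then $\varphi(\bar q,p)=\mathrm{rhs}_{M,\varphi}(q,a,p_1,\dots,p_{i-1},p,p_{i+1},\dots,p_k)\Psi_{iM}/v$, where $\Psi_{iM}$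 is the substitution $[\tilde q(x_j)\leftarrow\tilde q_M(s_j)\mid\tilde q\in Q_M,\ j\in[k],\ j\ne i]$ followed by $\Omega$. Then $N$ is equivalent to $M$, i.e., $[\![N]\!]=[\![M]\!]$.
   Context: Trees and patterns. $T_\Delta(Z)$ is the set of trees over ranked alphabet $\Delta$ with extra nullary symbols $Z$; $t/v$ is the subtree at node $v\in\mathbb N_+^*$; $\bot$ is a special nullary symbol; $V_\bot(t)$ is the set of nodes labelled $\bot$. $\sqcap T$ is the greatest lower bound of a finite nonempty set $T$ of trees w.r.t. the order $t\sqsubseteq t'$ ($t'$ obtained from $t$ by replacing occurrences of $\bot$ by trees): the largest common prefix with $\bot$ at the highest nodes of disagreement. A $\Sigma$-context is $C\in T_\Sigma(\{\bot\})$ with exactly one $\bot$. $Q(Y)=\{q(y)\mid q\in Q,y\in Y\}$, $X=\{x_0,x_1,\dots\}$, $X_k=\{x_1,\dots,x_k\}$. Dtlas. A dtla $M$ from $\Sigma$ to $\Delta$ consists of a finite set $Q_M$ of states, a total deterministic bottom-up tree automaton with finite state set $P_M$ and transitions $\delta(a,p_1,\dots,p_k)$, extended to $\delta_M:T_\Sigma\to P_M$ ($[\![p]\!]_M=\delta_M^{-1}(p)$), axioms $A_M(p)\in T_\Delta(Q_M(\{x_0\}))$, and at most one rule $q(a(x_1\langle p_1\rangle,\dots,x_k\langle p_k\rangle))\to\mathrm{rhs}_M(q,a,p_1,\dots,p_k)\in T_\Delta(Q_M(X_k))$ per $q,a,p_1,\dots,p_k$. Semantics: $q_M(a(s_1,\dots,s_k))=\mathrm{rhs}_M(q,a,\delta_M(s_1),\dots,\delta_M(s_k))[q'(x_i)\leftarrow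 q'_M(s_i)]$, $M(s)=A_M(\delta_M(s))[q(x_0)\leftarrow q_M(s)]$. A dtop is a dtla with a single look-ahead state $\bot$; a total dtop $N$ has an axiom $A_N\in T_\Delta(Q_N(\{x_0\}))$ and, for every $q\in Q_N$, $a\in\Sigma^{(k)}$, exactly one rule $q(a(x_1,\dots,x_k))\to\mathrm{rhs}_N(q,a)\in T_\Delta(Q_N(X_k))$. A dtpla has $|P_M|\ge2$. $M(C[p])\in T_\Delta(Q_M\times P_M)$ is the output on context $C$ with the hole treated as a leaf of look-ahead state $p$ and $q_M(p)=\langle q,p\rangle$; $N(C)=N(C[\bot])$. A state is reachable if $\langle q,p\rangle$ labels a node of $M(C[p])$ for some context $C$ and $p$. $M$ is la-uniform if there is $\rho_M:Q_M\to P_M$ with domain of $[\![q]\!]_M$ equal to $[\![\rho_M(q)]\!]_M$, every $q(x_0)$ in $A_M(p)$ having $\rho_M(q)=p$, every $q'(x_i)$ in $\mathrm{rhs}_M(q,a,p_1,\dots,p_k)$ having $\rho_M(q')=p_i$, and the rule for $q,a,p_1,\dots,p_k$ existing iff $\delta(a,p_1,\dots,p_k)=\rho_M(q)$. Earliest: no state $q$ and $d\in\Delta$ such that $q(s)$ has root label $d$ for all $s$ in the domain of $[\![q]\!]$. Canonical: total, la-uniform, earliest, all states reachable, distinct states have distinct translations. For $t\in T_\Delta(Q_M(X))$, $t\Omega$ replaces each $q(x_i)$ by the leaf $\langle q,\rho_M(q)\rangle$. For $t\in T_\Delta(Q_N(X))$, $t\Phi$ replaces each $q(x_i)$ by $\bot$.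 For $q\in Q_N$, $a\in\Sigma^{(k)}$, $p_1,\dots,p_k\in P_M$ and $p=\delta(a,p_1,\dots,p_k)$: $\mathrm{rhs}_{M,\varphi}(q,a,p_1,\dots,p_k)=\varphi(q,p)[\langle\bar q,p\rangle\leftarrow\mathrm{rhs}_M(\bar q,a,p_1,\dots,p_k)\mid\bar q\in Q_M]\in T_\Delta(Q_M(X_k))$. *)

(* Defs.v *)
From Stdlib Require List.
From mathcomp Require Import all_boot.
Set Implicit Arguments. Unset Strict Implicit. Unset Printing Implicit Defensive.

(* Trees T_D(Z): internal nodes labelled by D, extra nullary leaves from Z. *)
Inductive tree (D Z : Type) : Type :=
  | Leaf of Z
  | Node of D & seq (tree D Z).
Arguments Leaf {D Z}.
Arguments Node {D Z}.

Section Trees.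
Variables (D : Type).

Fixpoint wf {Z} (rk : D -> nat) (t : tree D Z) : bool :=
  match t with
  | Leaf _ => true
  | Node d ts => (size ts == rk d) && all (wf rk) ts
  end.

Fixpoint leaves {Z} (t : tree D Z) : seq Z :=
  match t with
  | Leaf z => [:: z]
  | Node _ ts => flatten (map leaves ts)
  end.

Fixpoint tmap {Z Y} (f : Z -> Y) (t : tree D Z) : tree D Y :=
  match t with
  | Leaf z => Leaf (f z)
  | Node d ts => Node d (map (tmap f) ts)
  end.

Fixpoint oseq {A} (s : seq (option A)) : option (seq A) :=
  match s with
  | [::] => Some [::]
  | o :: s' => match o, oseq s' with Some x, Some xs => Some (x :: xs) | _, _ => None end
  end.

Fixpoint osubst {Z Y} (f : Z -> option (tree D Y)) (t : tree D Z) : option (tree D Y) :=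
  match t with
  | Leaf z => f z
  | Node d ts => omap (Node d) (oseq (map (osubst f) ts))
  end.

(* t/v for a node v in N_+^* (1-based child indices) *)
Fixpoint subtree {Z} (t : tree D Z) (v : seq nat) : option (tree D Z) :=
  match v with
  | [::] => Some t
  | i :: v' => match t with
               | Leaf _ => None
               | Node _ ts => if (0 < i) && (i <= size ts)
                              then subtree (nth t ts i.-1) v' else None
               end
  end.

(* Trees with bottom: T_D(Z u {bot}), where the leaf [None] is bot. *)
(* t [= t' : t' is obtained from t by replacing occurrences of bot by trees *)
Fixpoint tle {Z} (t t' : tree D (option Z)) {struct t} : Prop :=
  match t, t' with
  | Leaf None, _ => True
  | Leaf (Some z), Leaf (Some z') => z = z'
  | Node d ts, Node d' ts' =>
      d = d' /\
      (fix go (us us' : seq (tree D (option Z))) : Prop :=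
         match us, us' with
         | [::], [::] => True
         | u :: us1, u' :: us1' => tle u u' /\ go us1 us1'
         | _, _ => False
         end) ts ts'
  | _, _ => False
  end.

Definition is_glb {Z} (g : tree D (option Z)) (S : tree D (option Z) -> Prop) : Prop :=
  (forall t, S t -> tle g t) /\
  (forall h, (forall t, S t -> tle h t) -> tle h g).

Definition is_bot_node {Z} (t : tree D (option Z)) (v : seq nat) : Prop :=
  subtree t v = Some (Leaf None).

Definition root_is {Z} (d : D) (t : tree D Z) : Prop :=
  match t with Node d' _ => d' = d | Leaf _ => False end.

End Trees.

(* dtla from S to D with states Q and look-ahead states P.
   [dl_delta a [p1..pk]] = delta(a,p1,...,pk) (total bottom-up automaton),
   [dl_ax p] = A_M(p) in T_D(Q({x0})) (a leaf q stands for q(x0)),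
   [dl_rhs q a [p1..pk]] = Some rhs_M(q,a,p1..pk) in T_D(Q(X_k)) if the rule
   exists (a leaf (q',i) stands for q'(x_i)), None otherwise. *)
Record dtla (S D Q P : Type) := Dtla {
  dl_delta : S -> seq P -> P;
  dl_ax : P -> tree D Q;
  dl_rhs : Q -> S -> seq P -> option (tree D (Q * nat)) }.

Record dtop (S D Q : Type) := Dtop {
  dt_ax : tree D Q;
  dt_rhs : Q -> S -> tree D (Q * nat) }.

(* a dtop is a dtla with the single look-ahead state bot (here: tt) *)
Definition dtop_as_dtla S D Q (N : dtop S D Q) : dtla S D Q unit :=
  Dtla (fun _ _ => tt) (fun _ => dt_ax N) (fun q a _ => Some (dt_rhs N q a)).

Section Semantics.
Variables (S D Q P : Type) (M : dtla S D Q P).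

(* generalised semantics on trees T_S(Z): leaf z has look-ahead state lp z
   and the output of state q on it is lo q z *)
Section Gen.
Variables (Z Y : Type) (lp : Z -> P) (lo : Q -> Z -> option (tree D Y)).

Fixpoint gstate (s : tree S Z) : P :=
  match s with
  | Leaf z => lp z
  | Node a ss => dl_delta M a (map gstate ss)
  end.

Fixpoint grun (s : tree S Z) : Q -> option (tree D Y) :=
  match s with
  | Leaf z => fun q => lo q z
  | Node a ss =>
      let ps := map gstate ss in
      let rs := map grun ss in
      fun q => match dl_rhs M q a ps with
               | None => None
               | Some r => osubst (fun z : Q * nat =>
                             if z.2 is i.+1 then nth (fun _ => None) rs i z.1 else None) r
               end
  end.

Definition gtrans (s : tree S Z) : option (tree D Y) :=
  osubst (fun q => grun s q) (dl_ax M (gstate s)).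
End Gen.

Definition stateM (s : tree S void) : P := gstate (@of_void P) s.
Definition qM (q : Q) (s : tree S void) : option (tree D void) :=
  grun (@of_void P) (fun _ z => of_void _ z) s q.
Definition transM (s : tree S void) : option (tree D void) :=
  gtrans (@of_void P) (fun _ z => of_void _ z) s.

(* M(C[p]) for a context C in T_S({bot}) (leaf tt is the hole) *)
Definition ctx_out (C : tree S unit) (p : P) : option (tree D (Q * P)) :=
  gtrans (fun _ => p) (fun q _ => Some (Leaf (q, p))) C.

Variables (rkS : S -> nat) (rkD : D -> nat).

Definition is_context (C : tree S unit) : Prop := wf rkS C /\ size (leaves C) = 1.

End Semantics.

Section Properties.
Variables (S D : Type) (rkS : S -> nat) (rkD : D -> nat).

Definition dtla_wf Q P (M : dtla S D Q P) : Prop :=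
  (forall p, wf rkD (dl_ax M p)) /\
  (forall q a ps r, size ps = rkS a -> dl_rhs M q a ps = Some r ->
     wf rkD r /\ forall z, List.In z (leaves r) -> (0 < z.2 <= rkS a)).

Definition dtop_wf Q (N : dtop S D Q) : Prop :=
  wf rkD (dt_ax N) /\
  (forall q a, wf rkD (dt_rhs N q a) /\
     forall z, List.In z (leaves (dt_rhs N q a)) -> (0 < z.2 <= rkS a)).

Variables (Q P : Type) (M : dtla S D Q P).

Definition reachable (q : Q) : Prop :=
  exists C p t, is_context rkS C /\ ctx_out M C p = Some t /\ List.In (q, p) (leaves t).

Definition total_dtla : Prop := forall s, wf rkS s -> transM M s <> None.

Definition la_uniform (rho : Q -> P) : Prop :=
  (forall q s, wf rkS s -> (qM M q s <> None <-> stateM M s = rho q)) /\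
  (forall p q, List.In q (leaves (dl_ax M p)) -> rho q = p) /\
  (forall q a ps r, size ps = rkS a -> dl_rhs M q a ps = Some r ->
     forall q' i, List.In (q', i) (leaves r) -> rho q' = nth (rho q') ps i.-1) /\
  (forall q a ps, size ps = rkS a ->
     (dl_rhs M q a ps <> None <-> dl_delta M a ps = rho q)).

Definition earliest : Prop :=
  ~ exists (q : Q) (d : D), forall s u, wf rkS s -> qM M q s = Some u -> root_is d u.

Definition distinct_translations : Prop :=
  forall q q' : Q, q <> q' -> exists s, wf rkS s /\ qM M q s <> qM M q' s.

Definition canonical (rho : Q -> P) : Prop :=
  [/\ total_dtla, la_uniform rho, earliest, forall q, reachable q
    & distinct_translations].
End Properties.

Section Ops.
Variables (S D : Type) (QM : Type) (PM : eqType) (M : dtla S D QM PM) (rho : QM -> PM).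

Definition OmegaA (t : tree D QM) : tree D (QM * PM) := tmap (fun q => (q, rho q)) t.
Definition OmegaR (t : tree D (QM * nat)) : tree D (QM * PM) := tmap (fun z => (z.1, rho z.1)) t.
Definition nobot Z (t : tree D Z) : tree D (option Z) := tmap Some t.
Definition Phi Z W (t : tree D W) : tree D (option Z) := tmap (fun _ => None) t.

Variables (QN : Type) (phi : QN -> PM -> tree D (QM * PM)).

Definition rhsMphi (q : QN) (a : S) (ps : seq PM) : option (tree D (QM * nat)) :=
  let p := dl_delta M a ps in
  osubst (fun z : QM * PM => if z.2 == p then dl_rhs M z.1 a ps else None) (phi q p).

(* t Psi_{iM} : [q(x_j) <- q_M(s_j) | j <> i] followed by Omega;
   i is 1-based here, ss lists s_1..s_k (s_i is ignored) *)
Definition PsiM (i : nat) (ss : seq (tree S void)) (dflt : tree S void)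
    (t : tree D (QM * nat)) : option (tree D (QM * PM)) :=
  osubst (fun z : QM * nat =>
            if z.2 == i then Some (Leaf (z.1, rho z.1))
            else if z.2 is j.+1 then omap (tmap (@of_void _)) (qM M z.1 (nth dflt ss j))
            else None) t.
End Ops.
Arguments Phi {D Z W} t.

(* Main.v *)
Require Import Defs.
From Stdlib Require List.
From mathcomp Require Import all_boot.
Set Implicit Arguments. Unset Strict Implicit. Unset Printing Implicit Defensive.

Section L.
Variable D : Type.

Section Ind.
Variables (Z : Type) (P : tree D Z -> Prop)
  (HL : forall z, P (Leaf z))
  (HN : forall d ts, (forall t, List.In t ts -> P t) -> P (Node d ts)).
Fixpoint tree_ind' (t : tree D Z) : P t :=
  match t with
  | Leaf z => HL z
  | Node d ts => HN d ((fix go (us : seq (tree D Z)) : forall u, List.In u us -> P u :=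
      match us with
      | [::] => fun u H => match H with end
      | u0 :: us' => fun u H => match H with
                     | or_introl E => eq_ind u0 P (tree_ind' u0) u E
                     | or_intror H' => go us' u H' end
      end) ts)
  end.
End Ind.

Lemma map_ext_In A B (f g : A -> B) s :
  (forall x, List.In x s -> f x = g x) -> map f s = map g s.
Proof. elim: s => //= x s IH H; rewrite (H x) ?IH //; [move=> y Hy; apply: H; by right|by left]. Qed.

Lemma In_flatten A (x : A) l s : List.In l s -> List.In x l -> List.In x (flatten s).
Proof. elim: s => //= l0 s IH [<-|H] Hx; apply List.in_or_app; [by left| right; exact: IH]. Qed.

Lemma flatten_In A (x : A) s : List.In x (flatten s) -> exists l, List.In l s /\ List.In x l.
Proof.
elim: s => //= l0 s IH H0; case: (List.in_app_or _ _ _ H0) => H; first by exists l0; split=> //; left.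
by case: (IH H) => l [H1 H2]; exists l; split=> //; right.
Qed.

Lemma nth_In A (x0 : A) s j : j < size s -> List.In (nth x0 s j) s.
Proof. elim: s j => //= x s IH [|j] H; [by left|right; exact: IH]. Qed.

Lemma oseq_map A (l : seq (option A)) xs : oseq l = Some xs -> l = map Some xs.
Proof.
elim: l xs => [|o l IH] xs /=; first by case=> <-.
case: o => // x; case E: (oseq l) => [ys|] // [<-]; by rewrite (IH ys).
Qed.

Lemma oseq_mapSome A (l : seq A) : oseq (map Some l) = Some l.
Proof. by elim: l => //= x l ->. Qed.

Lemma oseq_Some A (l : seq (option A)) : (forall o, List.In o l -> o <> None) -> oseq l <> None.
Proof.
elim: l => //= o l IH H. case: o H => [x|] H; last by case: (H None (or_introl erefl)).
by case E: (oseq l) => //; case: IH => // o' Ho'; apply: H; right.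
Qed.

Lemma oseq_bind A B (f : A -> option B) (l : seq (option A)) :
  obind (fun xs => oseq (map f xs)) (oseq l) = oseq (map (obind f) l).
Proof.
elim: l => //= o l IH; case: o => [x|] //=.
case E: (oseq l) IH => [xs|] /= <-; by case: (f x).
Qed.

Lemma map_eq_In A B C (f : A -> C) (g : B -> C) s r y :
  map f s = map g r -> List.In y r -> exists x, List.In x s /\ f x = g y.
Proof.
elim: s r => [|x s IH] [|y0 r] //= [E1 E2] [<-|H]; first by exists x; split=> //; left.
by case: (IH r E2 H) => x' [H1 H2]; exists x'; split=> //; right.
Qed.

Lemma subtree_tmap Z Y (m : Z -> Y) v (u : tree D Z) :
  subtree (tmap m u) v = omap (tmap m) (subtree u v).
Proof.
elim: v u => [|i v IH] [z|d us] //=. rewrite size_map.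
case: ifP => // /andP [Hi0 Hi]. have Hi' : i.-1 < size us by case: i Hi0 Hi.
rewrite -IH (set_nth_default (tmap m (Node d us))) ?size_map //.
by rewrite (nth_map (Node d us)).
Qed.

Lemma osubst_tmap Z Z' Y (m : Z -> Z') (g : Z' -> option (tree D Y)) t :
  osubst g (tmap m t) = osubst (g \o m) t.
Proof.
elim/tree_ind': t => //= d ts IH. rewrite -map_comp. by rewrite (map_ext_In (IH)).
Qed.

Lemma osubst_assoc Z Z' Y (h : Z -> option (tree D Z')) (g : Z' -> option (tree D Y)) t :
  obind (osubst g) (osubst h t) = osubst (fun z => obind (osubst g) (h z)) t.
Proof.
elim/tree_ind': t => //= d ts IH.
case E: (oseq (map (osubst h) ts)) => [xs|] /=.
- have := oseq_bind (osubst g) (map (osubst h) ts). rewrite E /= => ->.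
  by rewrite -map_comp (map_ext_In IH).
- have := oseq_bind (osubst g) (map (osubst h) ts). rewrite E /= -map_comp (map_ext_In IH).
  by move=> <-.
Qed.

Lemma osubst_ext Z Y (f g : Z -> option (tree D Y)) t :
  (forall z, List.In z (leaves t) -> f z = g z) -> osubst f t = osubst g t.
Proof.
elim/tree_ind': t => [z|d ts IH] H /=; first by apply: H; left.
congr (omap _ (oseq _)). apply: map_ext_In => x Hx. apply: IH => // z Hz.
apply: H => /=. apply: In_flatten Hz. exact: List.in_map.
Qed.

Lemma osubst_Some Z Y (f : Z -> option (tree D Y)) t :
  (forall z, List.In z (leaves t) -> f z <> None) -> osubst f t <> None.
Proof.
elim/tree_ind': t => [z|d ts IH] H /=; first by apply: H; left.
case E: (oseq _) => //. case: (oseq_Some (l := map (osubst f) ts)); last by rewrite E.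
move=> o Ho; case: (proj1 (List.in_map_iff _ _ _) Ho) => x [<- Hx]. apply: IH => // z Hz.
apply: H => /=. apply: In_flatten Hz. exact: List.in_map.
Qed.

Lemma osubst_void Z Y (f : Z -> option (tree D Y)) (t : tree D void) :
  osubst f (tmap (@of_void Z) t) = Some (tmap (@of_void Y) t).
Proof.
elim/tree_ind': t => [[]|d ts IH] /=. rewrite -map_comp (map_ext_In IH).
rewrite (_ : map _ ts = map Some (map (tmap (@of_void Y)) ts)) ?oseq_mapSome //.
by rewrite -map_comp.
Qed.

Lemma tmap_void (t : tree D void) (m : void -> void) : tmap m t = t.
Proof.
elim/tree_ind': t => [[]|d ts IH] /=. rewrite (map_ext_In IH).
by elim: ts {IH} => //= t ts [->].
Qed.

Lemma leaves_subtree Z v (t u : tree D Z) z :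
  subtree t v = Some u -> List.In z (leaves u) -> List.In z (leaves t).
Proof.
elim: v t => [|i v IH] t; first by case=> ->.
case: t => [y|d ts] //=.
case: ifP => // /andP [Hi0 Hi] Hs Hz. apply: In_flatten (IH _ Hs Hz).
apply: List.in_map; apply: nth_In. by case: i Hi0 Hi {Hs}.
Qed.

Lemma leaves_osubst Z Y (f : Z -> option (tree D Y)) t r z :
  osubst f t = Some r -> List.In z (leaves r) ->
  exists y r', List.In y (leaves t) /\ f y = Some r' /\ List.In z (leaves r').
Proof.
elim/tree_ind': t r => [y|d ts IH] r /=.
  by move=> H Hz; exists y, r; split=> //; left.
case E: (oseq _) => [rs|] //= [<-] /= Hz0.
case: (flatten_In Hz0) => l [Hl Hz].
case: (proj1 (List.in_map_iff _ _ _) Hl) => r0 [Er0 Hr0]; subst l.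
case: (map_eq_In (oseq_map E) Hr0) => t0 [Ht0 Ht0e].
case: (IH t0 Ht0 _ Ht0e Hz) => y [r' [H1 H2]]. exists y, r'; split=> //.
apply: In_flatten H1. exact: List.in_map.
Qed.

Lemma subtree_osubst Z Y (f : Z -> option (tree D Y)) v R T u :
  osubst f R = Some T -> subtree R v = Some u ->
  exists T', subtree T v = Some T' /\ osubst f u = Some T'.
Proof.
elim: v R T => [|i v IH] R T; first by move=> H [<-]; exists T.
case: R => [z|d rs] //=. case E: (oseq _) => [Ts|] //= [<-] /=.
have Hm := oseq_map E. have Hs : size Ts = size rs by rewrite -(size_map Some) -Hm size_map.
rewrite Hs. case: ifP => // /andP [Hi0 Hi] Hsub.
have Hi' : i.-1 < size rs by case: i Hi0 Hi {Hsub}.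
have Hn : osubst f (nth (Node d rs) rs i.-1) = Some (nth (Node d Ts) Ts i.-1).
  have := congr1 (fun l => nth None l i.-1) Hm.
  by rewrite /= (nth_map (Node d rs)) // (nth_map (Node d Ts)) ?Hs.
exact: IH Hn Hsub.
Qed.

Lemma tle_node Z (d d' : D) (ts ts' : seq (tree D (option Z))) :
  tle (Node d ts) (Node d' ts') -> d = d' /\ size ts = size ts' /\
  (forall j t0, j < size ts -> tle (nth t0 ts j) (nth t0 ts' j)).
Proof.
move=> /= [-> Hgo]; split=> //.
elim: ts ts' Hgo => [|t ts IH] [|t' ts'] //= [H1 H2].
case: (IH _ H2) => -> H3; split=> // [[|j]] t0 Hj //=. exact: H3.
Qed.

Lemma lemmaA W Z Z' Y (t : tree D W) (u : tree D Z) (m : Z -> Z')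
  (f : W -> option (tree D Y)) (g : Z -> option (tree D Y)) :
  tle (Phi (Z := Z') t) (tmap Some (tmap m u)) ->
  (forall v w u', subtree t v = Some (Leaf w) -> subtree u v = Some u' -> osubst g u' = f w) ->
  osubst f t = osubst g u.
Proof.
elim/tree_ind': t u => [w|d ts IH] u Htle H.
  by rewrite /= (H [::] w u).
case: u Htle H => [z|d' us] //= Htle H.
case: (tle_node Htle) => <- [Hsz Hn]. rewrite !size_map in Hsz.
congr (omap _ (oseq _)). apply: (eq_from_nth (x0 := None)); first by rewrite !size_map.
move=> j; rewrite size_map => Hj.
rewrite (nth_map (Node d ts)) // (nth_map (Node d us)) -?Hsz //.
apply: IH; first exact: nth_In.
- have := Hn j (Leaf None); rewrite size_map => /(_ Hj).
  by rewrite (nth_map (Node d ts)) // (nth_map (tmap m (Node d us))) ?size_map -?Hsz //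
     (nth_map (Node d us)) -?Hsz.
- move=> v w u' H1 H2. apply: (H (j.+1 :: v)) => /=.
  + by rewrite Hj.
  + by rewrite -Hsz Hj (set_nth_default (Node d us)) -?Hsz.
Qed.

End L.
Lemma allIn A (P : pred A) s x : all P s -> List.In x s -> P x.
Proof. elim: s => //= y s IH /andP [H1 H2] [<-|H] //. exact: IH. Qed.

Unset Implicit Arguments.
Theorem mainTheorem11 (S D : finType) (rkS : S -> nat) (rkD : D -> nat)
  (QM PM : finType) (M : dtla S D QM PM) (rho : QM -> PM)
  (QN : finType) (emb : QN -> {ffun PM -> tree D (QM * PM)}) (N : dtop S D QN) :
  dtla_wf rkS rkD M ->
  canonical rkS M rho ->
  1 < #|PM| ->
  injective emb ->
  dtop_wf rkS rkD N ->
  (forall q, reachable rkS (dtop_as_dtla N) q) ->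
  (forall q p z, List.In z (leaves (emb q p)) -> z.2 = p /\ rho z.1 = p) ->
  (* (i) *)
  is_glb (Phi (dt_ax N)) (fun t => exists p, t = nobot (OmegaA rho (dl_ax M p))) ->
  (* (ii) *)
  (forall v q p, subtree (dt_ax N) v = Some (Leaf q) ->
     subtree (OmegaA rho (dl_ax M p)) v = Some (emb q p)) ->
  (* (iii) *)
  (forall q a, is_glb (Phi (dt_rhs N q a))
     (fun t => exists ps r, size ps = rkS a /\
        rhsMphi M (fun q p => emb q p) q a ps = Some r /\ t = nobot (OmegaR rho r))) ->
  (* (iv) ; i is 0-based here, i.e. the variable is x_(i+1) *)
  (forall q qb a i ss p v, i < rkS a -> size ss = rkS a ->
     (forall j, j < rkS a -> j != i -> wf rkS (nth (Node a [::]) ss j)) ->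
     is_bot_node (Phi (Z:=QM * PM) (dt_rhs N q a)) v ->
     subtree (dt_rhs N q a) v = Some (Leaf (qb, i.+1)) ->
     let ps := [seq (if j == i then p else stateM M (nth (Node a [::]) ss j))
               | j <- iota 0 (rkS a)] in
     obind (fun r => obind (fun t => subtree t v) (PsiM M rho i.+1 ss (Node a [::]) r))
           (rhsMphi M (fun q p => emb q p) q a ps) = Some (emb qb p)) ->
  forall s, wf rkS s -> transM (dtop_as_dtla N) s = transM M s.
Proof.
move=> HMwf [Htot [Hrho1 [Hrho2 [Hrho3 Hrho4]]] _ _ _] _ _ HNwf _ Hemb Hi Hii Hiii Hiv.
have claim : forall s, wf rkS s -> forall q, qM (dtop_as_dtla N) q s =
    osubst (fun z => qM M z.1 s) (emb q (stateM M s)).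
  elim/tree_ind' => [[]|a ss IH] Hwf q.
  move/andP: Hwf => [/eqP Hsz Hall].
  have Hwfs : forall t, List.In t ss -> wf rkS t := fun t => allIn Hall.
  rewrite /qM /stateM /=.
  set ps := map (gstate M (of_void PM)) ss.
  set p := dl_delta M a ps.
  set sigN := (fun z : QN * nat => _).
  set sigM := (fun z0 : QM * nat => _).
  have Hps : size ps = rkS a by rewrite size_map.
  have [R HR] : exists R, rhsMphi M (fun q0 => emb q0) q a ps = Some R.
    case E: (rhsMphi _ _ _ _ _) => [R|]; first by exists R.
    exfalso; move: E; rewrite /rhsMphi -/p; apply: osubst_Some => z Hz.
    have [H1 H2] := Hemb _ _ _ Hz. rewrite H1 eqxx. by apply/Hrho4; rewrite // H2.
  rewrite (_ : osubst _ (emb q p) = osubst sigM R); last first.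
    transitivity (obind (osubst sigM) (rhsMphi M (fun q0 => emb q0) q a ps)); last by rewrite HR.
    rewrite /rhsMphi -/p osubst_assoc. apply: osubst_ext => z Hz.
    have [H1 _] := Hemb _ _ _ Hz. rewrite H1 eqxx. by case: dl_rhs.
  apply: (lemmaA (m := fun z : QM * nat => (z.1, rho z.1))).
    apply: (proj1 (Hiii q a)). exists ps, R. by split.
  move=> v [qb j] u' Hv Hu'.
  have Hin : List.In (qb,j) (leaves (dt_rhs N q a)) := leaves_subtree Hv (or_introl erefl).
  have := (proj2 (proj2 HNwf q a)) _ Hin => /= /andP [Hj0 Hj].
  case: j Hj0 Hj Hv Hin => // i _ Hi' Hv _.
  have Hi'' : i < size ss by rewrite Hsz.
  rewrite /sigN /= (nth_map (Node a [::])) //.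
  have := IH (nth (Node a [::]) ss i) (nth_In _ Hi'') (Hwfs _ (nth_In _ Hi'')) qb.
  rewrite /qM /stateM => ->.
  set si := nth (Node a [::]) ss i.
  set pi := gstate M (of_void PM) si.
  have := Hiv q qb a i ss pi v Hi' Hsz _ _ Hv.
  have Hpsi : [seq (if j == i then pi else stateM M (nth (Node a [::]) ss j)) | j <- iota 0 (rkS a)] = ps.
    have -> : ps = map (gstate M (of_void PM)) (mkseq (nth (Node a [::]) ss) (size ss)) by rewrite mkseq_nth.
    rewrite /mkseq -map_comp Hsz. apply: eq_map => j /=. by case: eqP => // ->.
  move=> H; cbv zeta in H. rewrite Hpsi HR /= in H.
  have {}H := H (fun j Hj _ => Hwfs _ (nth_In _ (leq_trans Hj (eq_leq (esym Hsz))))).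
  have {}H : obind ((subtree (D:=D))^~ v) (PsiM M rho i.+1 ss (Node a [::]) R) = Some (emb qb pi).
    apply: H. by rewrite /is_bot_node /Phi subtree_tmap Hv.
  case EP: (PsiM _ _ _ _ _ _) H => [T|] //= HT.
  have [T' [HT' Hu'T']] := subtree_osubst EP Hu'.
  rewrite HT' in HT; case: HT => HT. rewrite -HT.
  set chi := (fun z : QM * PM => _).
  rewrite -[RHS]/(obind (osubst chi) (Some T')) -Hu'T' osubst_assoc.
  apply: osubst_ext => [[q' j]] Hz.
  have [y [r' [Hy [Hhy Hz']]]] := leaves_osubst HR (leaves_subtree Hu' Hz).
  have [H1 _] := Hemb _ _ _ Hy. rewrite H1 eqxx in Hhy.
  have := (proj2 HMwf) _ _ _ _ Hps Hhy => [[_ /(_ _ Hz') /= /andP [Hj0 Hj]]].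
  case: j Hj0 Hj {Hz Hz'} => // j _ Hj.
  have Hj' : j < size ss by rewrite Hsz.
  rewrite /sigM /= (nth_map (Node a [::])) //.
  case: (eqVneq j i) => [->|Hne]; first by rewrite eqxx.
  rewrite eqSS (negbTE Hne) /qM.
  case: (grun _ _ _ _ _) => [g|] //=. by rewrite osubst_void tmap_void.
move=> s Hs. rewrite /transM /gtrans /=.
apply: (lemmaA (m := fun q : QM => (q, rho q))).
  apply: (proj1 Hi). by exists (gstate M (of_void PM) s).
move=> v q u' Hv Hu'.
have := Hii v q (stateM M s) Hv. rewrite /OmegaA subtree_tmap Hu' /= => [[He]].
have := claim s Hs q. rewrite /qM => ->. by rewrite -He osubst_tmap.
Qed.
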